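(* Let $d\ge 1$, let $\Omega=\operatorname{diag}(\omega_j)_{j=1}^d\in\mathbb{R}^{d\times d}$ with $\omega_j> 0$ for all $j$, let $\omega=\min_j\omega_j$, and let $A\in\mathbb{C}^{d\times d}$ be self-adjoint. Let $0<h\le 1$ and let $\psi_1,\phi\colon\mathbb{R}\to\mathbb{R}$ be even functions such that $\psi_1(\xi)=\operatorname{sinc}(\xi)\phi(\xi)$ for all $\xi\in\mathbb{R}$ and, for constants $c_0,c_1\ge 0$, \[ |\psi_1(\xi)|\le c_0,\qquad |\phi(\xi)|\le c_0,\qquad |\phi(\xi)-1|\le c_1|\xi|\qquad\text{for all }\xi\in\mathbb{R}. \] Assume $\omega\ge \tfrac12 c_0^2\|A\|+1$. Set $\Psi_1=\psi_1(h\Omega)$, $\Phi=\phi(h\Omega)$. For given $q_0,\dot q_0\in\mathbb{C}^d$, define $(q_n,\dot q_n)_{n\ge 0}$ recursively by \begin{align*} q_{n+1} &= \cos(h\Omega) q_n + h\operatorname{sinc}(h\Omega) \dot{q}_n - \tfrac12 h^2 \operatorname{sinc}(h\Omega) \Psi_1 A\Phi q_n,\\ \dot{q}_{n+1} &= -\Omega \sin(h\Omega) q_n + \cos(h\Omega) \dot{q}_n - \tfrac12 h \big( \cos(h\Omega) \Psi_1 A\Phi q_n + \Psi_1 A\Phi q_{n+1}\big). \end{align*} Then $\|q_n\|\le C$ for all $n$, with a constant $C$ depending only on $c_0$, $\|A\|$, $\|q_0\|$, $\|\Omega q_0\|$ and $\|\dot q_0\|$.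
   Context: $\|\cdot\|$ is the Euclidean norm on $\mathbb{C}^d$ and, for matrices, the induced operator norm. $\operatorname{sinc}(\xi)=\sin(\xi)/\xi$ for $\xi\ne0$ and $\operatorname{sinc}(0)=1$. For a function $f\colon\mathbb{R}\to\mathbb{R}$, $f(h\Omega)$ denotes the diagonal matrix $\operatorname{diag}(f(h\omega_j))_{j=1}^d$. *)

(* Defs.v *)
From HB Require Import structures.
From mathcomp Require Import all_boot all_order all_algebra.
From mathcomp Require Import all_classical all_reals all_analysis.
From mathcomp Require Import complex.
Set Implicit Arguments. Unset Strict Implicit. Unset Printing Implicit Defensive.
Import Order.TTheory GRing.Theory Num.Theory.
Local Open Scope ring_scope.
Local Open Scope complex_scope.

Section Defs.
Variable R : realType.

Definition sinc (x : R) : R := if x == 0 then 1 else sin x / x.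

Definition vnorm (d : nat) (v : 'cV[R[i]]_d) : R :=
  Num.sqrt (\sum_(j < d) ((@complex.Re R (v j ord0)) ^+ 2 + (@complex.Im R (v j ord0)) ^+ 2)).

Definition opnorm (d : nat) (A : 'M[R[i]]_d) : R :=
  sup [set vnorm (A *m v) | v in [set v : 'cV[R[i]]_d | vnorm v <= 1]]%classic.

Definition adjmx (d : nat) (A : 'M[R[i]]_d) : 'M[R[i]]_d :=
  \matrix_(i, j) (A j i)^*.
Definition selfadjoint (d : nat) (A : 'M[R[i]]_d) : Prop := adjmx A = A.

Definition diagR (d : nat) (w : 'I_d -> R) : 'M[R[i]]_d :=
  diag_mx (\row_j (w j)%:C).

(* f(h Omega) = diag(f(h w_j)) *)
Definition fun_mx (d : nat) (f : R -> R) (h : R) (w : 'I_d -> R) : 'M[R[i]]_d :=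
  diagR (fun j => f (h * w j)).

Definition step (d : nat) (w : 'I_d -> R) (A : 'M[R[i]]_d) (h : R)
    (psi1 phi : R -> R) (x : 'cV[R[i]]_d * 'cV[R[i]]_d) :
    'cV[R[i]]_d * 'cV[R[i]]_d :=
  let Om := diagR w in
  let cosh := fun_mx cos h w in
  let sinh := fun_mx sin h w in
  let sinch := fun_mx sinc h w in
  let Psi1 := fun_mx psi1 h w in
  let Phi := fun_mx phi h w in
  let hC := h%:C in
  let q := x.1 in let qd := x.2 in
  let q' := cosh *m q + hC *: (sinch *m qd)
            - (2^-1 * h ^+ 2)%:C *: (sinch *m Psi1 *m A *m Phi *m q) in
  let qd' := - (Om *m sinh *m q) + cosh *m qd
             - (2^-1 * h)%:C *: (cosh *m Psi1 *m A *m Phi *m q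
                                 + Psi1 *m A *m Phi *m q') in
  (q', qd').

Definition traj (d : nat) (w : 'I_d -> R) (A : 'M[R[i]]_d) (h : R)
    (psi1 phi : R -> R) (q0 qd0 : 'cV[R[i]]_d) (n : nat) :
    'cV[R[i]]_d * 'cV[R[i]]_d :=
  iter n (step w A h psi1 phi) (q0, qd0).

End Defs.

(* Main.v *)
Require Import Defs.
From HB Require Import structures.
From mathcomp Require Import all_boot all_order all_algebra.
From mathcomp Require Import all_classical all_reals all_analysis.
From mathcomp Require Import complex.
From mathcomp Require Import ring lra.
Import Order.TTheory GRing.Theory Num.Theory.
Local Open Scope ring_scope.
Local Open Scope complex_scope.

Module H.

Set Implicit Arguments. Unset Strict Implicit. Unset Printing Implicit Defensive.

Section S.
Variable R : realType.
Local Notation C := R[i].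
Local Notation Re := (@complex.Re R).
Local Notation Im := (@complex.Im R).

Lemma dgE d (f : 'I_d -> R) (u : 'cV[C]_d) i j : (diagR f *m u) i j = (f i)%:C * u i j.
Proof. by rewrite /diagR mul_diag_mx !mxE. Qed.

Lemma ReD (a b : C) : Re (a + b) = Re a + Re b. Proof. by case: a => ? ?; case: b => ? ?. Qed.
Lemma ImD (a b : C) : Im (a + b) = Im a + Im b. Proof. by case: a => ? ?; case: b => ? ?. Qed.
Lemma ReN (a : C) : Re (- a) = - Re a. Proof. by case: a => ? ?. Qed.
Lemma ImN (a : C) : Im (- a) = - Im a. Proof. by case: a => ? ?. Qed.
Lemma ReMR k (a : C) : Re (k%:C * a) = k * Re a.
Proof. case: a => x y /=. by rewrite mul0r subr0. Qed.
Lemma ImMR k (a : C) : Im (k%:C * a) = k * Im a.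
Proof. case: a => x y /=. by rewrite mul0r addr0. Qed.
Lemma ReM (a b : C) : Re (a * b) = Re a * Re b - Im a * Im b. Proof. by case: a => ? ?; case: b => ? ?. Qed.
Lemma ImM (a b : C) : Im (a * b) = Re a * Im b + Im a * Re b. Proof. case: a => ? ?; case: b => ? ? /=. ring. Qed.
Lemma Re_sum I (r : seq I) P (F : I -> C) : Re (\sum_(i <- r | P i) F i) = \sum_(i <- r | P i) Re (F i).
Proof. by elim/big_rec2: _ => [|i x y _ <-]; rewrite ?ReD. Qed.
Lemma Im_sum I (r : seq I) P (F : I -> C) : Im (\sum_(i <- r | P i) F i) = \sum_(i <- r | P i) Im (F i).
Proof. by elim/big_rec2: _ => [|i x y _ <-]; rewrite ?ImD. Qed.

Variable d : nat.
Implicit Types u v : 'cV[C]_d.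

Definition ip u v : R := \sum_(j < d) (Re (u j ord0) * Re (v j ord0) + Im (u j ord0) * Im (v j ord0)).

Lemma vnormE u : vnorm u = Num.sqrt (ip u u).
Proof. by rewrite /vnorm /ip; congr Num.sqrt; apply: eq_bigr => j _; rewrite !expr2. Qed.

Lemma ipC u v : ip u v = ip v u.
Proof. by apply: eq_bigr => j _; ring. Qed.
Lemma ipDl u v x : ip (u + v) x = ip u x + ip v x.
Proof. rewrite /ip -big_split; apply: eq_bigr => j _; rewrite !mxE ReD ImD /=; ring. Qed.
Lemma ipDr u v x : ip x (u + v) = ip x u + ip x v.
Proof. by rewrite ipC ipDl ipC (ipC v). Qed.
Lemma ipNl u v : ip (- u) v = - ip u v.
Proof. rewrite /ip -sumrN; apply: eq_bigr => j _; rewrite !mxE ReN ImN; ring. Qed.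
Lemma ipNr u v : ip v (- u) = - ip v u.
Proof. by rewrite ipC ipNl ipC. Qed.
Lemma ipBl u v x : ip (u - v) x = ip u x - ip v x.
Proof. by rewrite ipDl ipNl. Qed.
Lemma ipBr u v x : ip x (u - v) = ip x u - ip x v.
Proof. by rewrite ipDr ipNr. Qed.
Lemma ipZl k u v : ip (k%:C *: u) v = k * ip u v.
Proof. rewrite /ip mulr_sumr; apply: eq_bigr => j _; rewrite !mxE ReMR ImMR; ring. Qed.
Lemma ipZr k u v : ip v (k%:C *: u) = k * ip v u.
Proof. by rewrite ipC ipZl ipC. Qed.
Lemma ip_dg (f : 'I_d -> R) u v : ip (diagR f *m u) v = ip u (diagR f *m v).
Proof. by apply: eq_bigr => j _; rewrite !dgE !ReMR !ImMR; ring. Qed.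
Lemma ip_ge0 u : 0 <= ip u u.
Proof. by apply: sumr_ge0 => j _; rewrite -!expr2 addr_ge0 // sqr_ge0. Qed.

Lemma ip_dg_le (f : 'I_d -> R) K u : (forall j, f j ^+ 2 <= K) ->
  ip (diagR f *m u) (diagR f *m u) <= K * ip u u.
Proof.
move=> H; rewrite /ip mulr_sumr; apply: ler_sum => j _; rewrite !dgE !ReMR !ImMR.
have e : f j * Re (u j ord0) * (f j * Re (u j ord0)) + f j * Im (u j ord0) * (f j * Im (u j ord0))
  = f j ^+ 2 * (Re (u j ord0) ^+ 2 + Im (u j ord0) ^+ 2) by ring.
rewrite e -!expr2; apply: ler_wpM2r => //; by rewrite addr_ge0 // sqr_ge0.
Qed.
Lemma ip_dg_ge (f : 'I_d -> R) K u : (forall j, K <= f j ^+ 2) ->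
  K * ip u u <= ip (diagR f *m u) (diagR f *m u).
Proof.
move=> H; rewrite /ip mulr_sumr; apply: ler_sum => j _; rewrite !dgE !ReMR !ImMR.
have e : f j * Re (u j ord0) * (f j * Re (u j ord0)) + f j * Im (u j ord0) * (f j * Im (u j ord0))
  = f j ^+ 2 * (Re (u j ord0) ^+ 2 + Im (u j ord0) ^+ 2) by ring.
rewrite e -!expr2; apply: ler_wpM2r => //; by rewrite addr_ge0 // sqr_ge0.
Qed.

Lemma ip_rot (c s : 'I_d -> R) z v : (forall j, c j ^+ 2 + s j ^+ 2 = 1) ->
  ip (diagR c *m z + diagR s *m v) (diagR c *m z + diagR s *m v)
  + ip (- (diagR s *m z) + diagR c *m v) (- (diagR s *m z) + diagR c *m v)
  = ip z z + ip v v.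
Proof.
move=> H; rewrite /ip -!big_split; apply: eq_bigr => j _ /=.
rewrite !(dgE, mxE) !ReD !ImD !ReN !ImN !ReMR !ImMR.
rewrite -[RHS]mul1r -(H j); ring.
Qed.

Lemma ipMR_C (A : 'M[C]_d) i : Re ((A *m (0 : 'cV[C]_d)) i ord0) = 0.
Proof. by rewrite mulmx0 mxE. Qed.

Lemma Re_mul (A : 'M[C]_d) u i :
  Re ((A *m u) i ord0) = \sum_j (Re (A i j) * Re (u j ord0) - Im (A i j) * Im (u j ord0)).
Proof. by rewrite mxE Re_sum; apply: eq_bigr => j _; rewrite ReM. Qed.
Lemma Im_mul (A : 'M[C]_d) u i :
  Im ((A *m u) i ord0) = \sum_j (Re (A i j) * Im (u j ord0) + Im (A i j) * Re (u j ord0)).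
Proof. by rewrite mxE Im_sum; apply: eq_bigr => j _; rewrite ImM. Qed.

Lemma ip_sa (A : 'M[C]_d) u v : selfadjoint A -> ip (A *m u) v = ip u (A *m v).
Proof.
move=> H.
have hA i j : A j i = (A i j)^* by rewrite -{1}H /adjmx mxE.
have hr i j : Re (A j i) = Re (A i j).
  by rewrite hA; case: (A i j) => ? ?.
have hi i j : Im (A j i) = - Im (A i j).
  by rewrite hA; case: (A i j) => ? ?.
rewrite /ip.
under eq_bigr do rewrite Re_mul Im_mul !mulr_suml -big_split.
under [RHS]eq_bigr do rewrite Re_mul Im_mul !mulr_sumr -big_split.
rewrite [RHS]exchange_big /=; apply: eq_bigr => i _; apply: eq_bigr => j _.
rewrite hr hi; ring.
Qed.

Lemma sqr_normr (x : R) : `|x| ^+ 2 = x ^+ 2.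
Proof. by rewrite -normrX ger0_norm // sqr_ge0. Qed.

Lemma abs_le1 (x : R) : x ^+ 2 <= 1 -> `|x| <= 1.
Proof. move=> H; have := sqr_normr x; have := normr_ge0 x; nra. Qed.

Lemma sq_le (x k : R) : `|x| <= k -> x ^+ 2 <= k ^+ 2.
Proof. move=> H; rewrite -sqr_normr; apply: lerXn2r => //; rewrite nnegrE //; exact: le_trans H. Qed.

Lemma term_le_ip v j : Re (v j ord0) ^+ 2 + Im (v j ord0) ^+ 2 <= ip v v.
Proof.
rewrite /ip (bigD1 j) //= -!expr2 lerDl; apply: sumr_ge0 => i _.
by rewrite -!expr2 addr_ge0 // sqr_ge0.
Qed.

Definition Kb (A : 'M[C]_d) i := \sum_j (`|Re (A i j)| + `|Im (A i j)|).

Lemma opnorm_ub (A : 'M[C]_d) :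
  has_ubound [set vnorm (A *m v) | v in [set v : 'cV[C]_d | vnorm v <= 1]]%classic.
Proof.
exists (Num.sqrt (\sum_i (Kb A i ^+ 2 + Kb A i ^+ 2))) => _ [v Hv <-].
rewrite vnormE ler_sqrt; last by apply: sumr_ge0 => i _; rewrite addr_ge0 // sqr_ge0.
move: Hv; rewrite /= vnormE -{1}sqrtr1 ler_sqrt // => Hv.
have hre j : `|Re (v j ord0)| <= 1.
  apply: abs_le1; apply: le_trans Hv; apply: le_trans (term_le_ip v j).
  by rewrite lerDl sqr_ge0.
have him j : `|Im (v j ord0)| <= 1.
  apply: abs_le1; apply: le_trans Hv; apply: le_trans (term_le_ip v j).
  by rewrite lerDr sqr_ge0.
rewrite /ip; apply: ler_sum => i _; rewrite -!expr2; apply: lerD; apply: sq_le.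
- rewrite Re_mul; apply: le_trans (ler_norm_sum _ _ _) _; apply: ler_sum => j _.
  apply: le_trans (ler_normB _ _) _; rewrite !normrM; apply: lerD.
    by apply: ler_piMr.
  by apply: ler_piMr.
- rewrite Im_mul; apply: le_trans (ler_norm_sum _ _ _) _; apply: ler_sum => j _.
  apply: le_trans (ler_normD _ _) _; rewrite !normrM; apply: lerD.
    by apply: ler_piMr.
  by apply: ler_piMr.
Qed.

Lemma vnorm0 : vnorm (0 : 'cV[C]_d) = 0.
Proof. rewrite vnormE /ip big1 ?sqrtr0 // => j _; rewrite mxE /=; ring. Qed.

Lemma opnorm_ge0 (A : 'M[C]_d) : 0 <= opnorm A.
Proof.
rewrite /opnorm; apply: (ub_le_sup (opnorm_ub A)).
exists 0; first by rewrite /= vnorm0.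
by rewrite mulmx0 vnorm0.
Qed.

Lemma ipZZ k u : ip (k%:C *: u) (k%:C *: u) = k ^+ 2 * ip u u.
Proof. by rewrite ipZl ipZr mulrA expr2. Qed.

Lemma ip_opnorm (A : 'M[C]_d) u : ip (A *m u) (A *m u) <= opnorm A ^+ 2 * ip u u.
Proof.
set a := opnorm A.
apply/ler_addgt0Pr => e e0.
have a0 : 0 <= a ^+ 2 by rewrite sqr_ge0.
set t2 := ip u u + e / (a ^+ 2 + 1).
have t2pos : 0 < t2 by rewrite /t2 ltr_wpDl ?ip_ge0 // divr_gt0 // ltr_wpDl.
set k := (Num.sqrt t2)^-1.
have k2 : k ^+ 2 = t2^-1 by rewrite /k exprVn sqr_sqrtr // ltW.
have Hy : vnorm (k%:C *: u) <= 1.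
  rewrite vnormE -sqrtr1 ler_sqrt // ipZZ k2 ler_pdivrMl // mulr1 /t2 lerDl.
  by rewrite ltW // divr_gt0 // ltr_wpDl.
have H1 : vnorm (A *m (k%:C *: u)) <= a.
  by apply: (ub_le_sup (opnorm_ub A)); exists (k%:C *: u).
have H2 : k ^+ 2 * ip (A *m u) (A *m u) <= a ^+ 2.
  rewrite -ipZZ scalemxAr.
  move: H1; rewrite vnormE => H1.
  rewrite -(sqr_sqrtr (ip_ge0 _)); apply: lerXn2r => //; rewrite nnegrE ?sqrtr_ge0 //.
  exact: le_trans (sqrtr_ge0 _) H1.
move: H2; rewrite k2 -ler_pdivlMl ?invr_gt0 // invrK => H2.
apply: le_trans H2 _.
rewrite /t2 mulrDl [ip u u * _]mulrC lerD2l.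
rewrite mulrAC ler_pdivrMr ?ltr_wpDl //.
apply: ler_wpM2l; [exact: ltW|]; by rewrite lerDl.
Qed.

End S.

End H.
Import H.
Unset Implicit Arguments. Set Strict Implicit.

Module P2.


Section Scheme.
Variables (R : realType) (d : nat) (w : 'I_d -> R) (A : 'M[R[i]]_d) (h : R) (psi1 phi : R -> R).
Hypothesis wpos : forall j, 0 < w j.
Hypothesis hpos : 0 < h.
Hypothesis Hsa : selfadjoint A.
Hypothesis Hpsi : forall x, psi1 x = sinc x * phi x.
Local Notation C := R[i].
Local Notation Om := (diagR w).
Local Notation cc := (fun_mx (@cos R) h w).
Local Notation ss := (fun_mx (@sin R) h w).
Local Notation SS := (fun_mx (@sinc R) h w).
Local Notation P1 := (fun_mx psi1 h w).
Local Notation Ph := (fun_mx phi h w).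
Implicit Types u v q : 'cV[C]_d.

Definition Mq q := Ph *m (A *m (Ph *m q)).
Definition vv (x : 'cV[C]_d * 'cV[C]_d) := x.2 - (2^-1 * h)%:C *: (SS *m Mq x.1).
Local Notation stp := (step w A h psi1 phi).

Lemma sincE j : sinc (h * w j) * (h * w j) = sin (h * w j).
Proof.
have hw : h * w j != 0 by rewrite mulf_neq0 // gt_eqF.
by rewrite /sinc (negbTE hw) divfK.
Qed.

Lemma P1E u : P1 *m u = SS *m (Ph *m u).
Proof. by apply/matrixP => i j; rewrite /fun_mx !dgE Hpsi rmorphM mulrA. Qed.

Lemma dg_comm (f g : 'I_d -> R) u : diagR f *m (diagR g *m u) = diagR g *m (diagR f *m u).
Proof. by apply/matrixP => i j; rewrite !dgE mulrA [X in X * _]mulrC mulrA. Qed.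

Lemma Om_hS u : Om *m (h%:C *: (SS *m u)) = ss *m u.
Proof.
apply/matrixP => i j; rewrite /fun_mx !(dgE, mxE) -sincE !rmorphM /=; ring.
Qed.

Lemma step1 x : (stp x).1 = cc *m x.1 + h%:C *: (SS *m vv x).
Proof.
case: x => q p; rewrite /step /= /vv /Mq -!mulmxA P1E.
move: (A *m (Ph *m q)) => y.
have e : (2^-1 * h ^+ 2)%:C = (2^-1 * h)%:C * h%:C :> C by rewrite -rmorphM expr2 mulrA.
rewrite e.
apply/matrixP => i j; rewrite /fun_mx !(dgE, mxE); ring.
Qed.

Lemma step2 x : vv (stp x) + h%:C *: (SS *m Mq (stp x).1) = -(ss *m (Om *m x.1)) + cc *m vv x.
Proof.
case: x => q p; rewrite /step /= /vv /Mq -!mulmxA !P1E.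
move: (A *m (Ph *m (_ + _ - _))) => y1.
move: (A *m (Ph *m q)) => y0.
have eh : h%:C = (2^-1 * h)%:C * 2 :> C.
  by rewrite -(rmorph_nat (real_complex R) 2) -rmorphM mulrAC mulVf ?mul1r // pnatr_eq0.
rewrite eh.
apply/matrixP => i j; rewrite /fun_mx !(dgE, mxE); ring.
Qed.

Lemma back x : x.1 = cc *m (stp x).1 - h%:C *: (SS *m (vv (stp x) + h%:C *: (SS *m Mq (stp x).1))).
Proof.
rewrite step2 step1; move: (vv x) => v; case: x => q p /=.
apply/matrixP => i j; rewrite /fun_mx !(dgE, mxE).
have cs : (cos (h * w i))%:C ^+ 2 + (sin (h * w i))%:C ^+ 2 = 1 :> C.
  by rewrite -!rmorphXn -rmorphD cos2Dsin2.
transitivity (((cos (h * w i))%:C ^+ 2 + (sin (h * w i))%:C ^+ 2) * q i j); first by rewrite cs mul1r.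
rewrite -!sincE !rmorphM /=; ring.
Qed.

Lemma z1E x : Om *m (stp x).1 = cc *m (Om *m x.1) + ss *m vv x.
Proof. by rewrite step1 mulmxDr Om_hS dg_comm. Qed.

Lemma ip_M u v : ip (Mq u) v = ip u (Mq v).
Proof. by rewrite /Mq ip_dg ip_sa // ip_dg. Qed.

Lemma rot x :
  ip (Om *m (stp x).1) (Om *m (stp x).1)
  + ip (vv (stp x) + h%:C *: (SS *m Mq (stp x).1)) (vv (stp x) + h%:C *: (SS *m Mq (stp x).1))
  = ip (Om *m x.1) (Om *m x.1) + ip (vv x) (vv x).
Proof.
rewrite z1E step2 /fun_mx.
exact: (@ip_rot R d (fun j => cos (h * w j)) (fun j => sin (h * w j)) _ _ (fun j => cos2Dsin2 (h * w j))).
Qed.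

Lemma ip_SS u v : ip (SS *m u) v = ip u (SS *m v).
Proof. exact: ip_dg. Qed.

Lemma e3L y : ip (stp y).1 (Mq y.1) = ip (cc *m y.1) (Mq y.1) + h * ip (vv y) (SS *m Mq y.1).
Proof.
Timeout 20 rewrite step1. Timeout 20 rewrite ipDl. Timeout 20 rewrite ipZl. Timeout 20 by rewrite (ip_SS (vv y) (Mq y.1)).
Qed.

Lemma ipsq (a b : 'cV[C]_d) k : ip (a + k%:C *: b) (a + k%:C *: b) = ip a a + 2 * k * ip a b + k ^+ 2 * ip b b.
Proof. rewrite ipDl !ipDr !ipZl !ipZr (ipC b a); ring. Qed.

Lemma e4L x : ip (stp x).1 (Mq x.1) = ip (Mq (stp x).1) (cc *m (stp x).1)
   - h * ip (SS *m Mq (stp x).1) (vv (stp x)) - h ^+ 2 * ip (SS *m Mq (stp x).1) (SS *m Mq (stp x).1).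
Proof.
Timeout 30 rewrite -ip_M {1}(back x) ipBr ipZr -ip_SS ipDr ipZr. Timeout 30 ring.
Qed.

Definition En x := ip (vv x) (vv x) + ip (Om *m x.1) (Om *m x.1) + ip (stp x).1 (Mq x.1).

Lemma alg_aux (V1 Z1 T3 C3 A2 G2 B2 C4 V0 Z0 T4 k : R) :
  Z1 + (V1 + 2 * k * A2 + k ^+ 2 * B2) = Z0 + V0 ->
  T3 = C3 + k * A2 -> T4 = C4 - k * G2 - k ^+ 2 * B2 -> C4 = C3 -> G2 = A2 ->
  V1 + Z1 + T3 = V0 + Z0 + T4.
Proof. move=> e1 e3 e4 c1 c2; rewrite e3 e4 c1 c2; lra. Qed.

Arguments alg_aux {V1 Z1 T3 C3 A2 G2 B2 C4 V0 Z0 T4 k}.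

Lemma En_step x : En (stp x) = En x.
Proof.
have e1 := rot x. Timeout 15 rewrite ipsq in e1.
rewrite /En.
Timeout 30 exact: (alg_aux e1 (e3L (stp x)) (e4L x) (ipC _ _) (ipC _ _)).
Qed.

End Scheme.

End P2.
Import P2.

Module P3.


Section Bounds.
Variables (R : realType) (d : nat) (w : 'I_d -> R) (A : 'M[R[i]]_d) (h : R) (psi1 phi : R -> R).
Hypothesis wpos : forall j, 0 < w j.
Hypothesis hpos : 0 < h.
Hypothesis Hsa : selfadjoint A.
Hypothesis Hpsi : forall x, psi1 x = sinc x * phi x.
Local Notation C := R[i].
Local Notation Om := (diagR w).
Local Notation cc := (fun_mx (@cos R) h w).
Local Notation ss := (fun_mx (@sin R) h w).
Local Notation SS := (fun_mx (@sinc R) h w).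
Local Notation P1 := (fun_mx psi1 h w).
Local Notation Ph := (fun_mx phi h w).
Local Notation stp := (step w A h psi1 phi).
Local Notation Mq := (Mq R d w A h phi).
Local Notation vv := (vv R d w A h phi).
Local Notation En := (En R d w A h psi1 phi).
Let rot := @P2.rot R d w A h psi1 phi wpos hpos Hpsi.
Let En_step := @P2.En_step R d w A h psi1 phi wpos hpos Hsa Hpsi.
Let P1E := @P2.P1E R d w h psi1 phi Hpsi.
Let ipsq := @P2.ipsq R d.
Implicit Types u v q : 'cV[C]_d.

Variable c0 : R.
Hypothesis c0pos : 0 <= c0.
Hypothesis hle1 : h <= 1.
Hypothesis Hpsib : forall x, `|psi1 x| <= c0.
Hypothesis Hphib : forall x, `|phi x| <= c0.
Local Notation al := (opnorm A).
Local Notation m := (c0 ^+ 2 * opnorm A).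
Hypothesis Hw : forall j, 2^-1 * c0 ^+ 2 * opnorm A + 1 <= w j.

Lemma m_ge0 : 0 <= m.
Proof. by rewrite mulr_ge0 ?sqr_ge0 ?opnorm_ge0. Qed.

Lemma Ph_le u : ip (Ph *m u) (Ph *m u) <= c0 ^+ 2 * ip u u.
Proof. by apply: ip_dg_le => j; apply: sq_le. Qed.
Lemma P1_le u : ip (P1 *m u) (P1 *m u) <= c0 ^+ 2 * ip u u.
Proof. by apply: ip_dg_le => j; apply: sq_le. Qed.

Lemma chain u : ip (A *m (Ph *m u)) (A *m (Ph *m u)) <= c0 ^+ 2 * al ^+ 2 * ip u u.
Proof.
apply: le_trans (ip_opnorm _ _) _.
have -> : c0 ^+ 2 * al ^+ 2 * ip u u = al ^+ 2 * (c0 ^+ 2 * ip u u) by ring.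
apply: ler_wpM2l; [exact: sqr_ge0| exact: Ph_le].
Qed.

Lemma Mq_le u : ip (Mq u) (Mq u) <= m ^+ 2 * ip u u.
Proof.
rewrite /P2.Mq; apply: le_trans (Ph_le _) _.
have -> : m ^+ 2 * ip u u = c0 ^+ 2 * (c0 ^+ 2 * al ^+ 2 * ip u u) by ring.
by apply: ler_wpM2l; [exact: sqr_ge0| exact: chain].
Qed.

Lemma SMq_le u : ip (SS *m Mq u) (SS *m Mq u) <= m ^+ 2 * ip u u.
Proof.
rewrite /Mq /P2.Mq -P1E; apply: le_trans (P1_le _) _.
have -> : m ^+ 2 * ip u u = c0 ^+ 2 * (c0 ^+ 2 * al ^+ 2 * ip u u) by ring.
by apply: ler_wpM2l; [exact: sqr_ge0| exact: chain].
Qed.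

Lemma Om_ge u : (2^-1 * m + 1) ^+ 2 * ip u u <= ip (Om *m u) (Om *m u).
Proof.
apply: ip_dg_ge => j; apply: lerXn2r; rewrite ?nnegrE //.
- by rewrite addr_ge0 // mulr_ge0 // m_ge0.
- by apply: le_trans (ltW (wpos j)).
- by rewrite mulrA; exact: Hw.
Qed.

Lemma ipsqB (a b : 'cV[C]_d) : ip (a - b) (a - b) = ip a a - 2 * ip a b + ip b b.
Proof. rewrite ipDl !ipDr !ipNl !ipNr (ipC b a); ring. Qed.
Lemma ipsqD (a b : 'cV[C]_d) : ip (a + b) (a + b) = ip a a + 2 * ip a b + ip b b.
Proof. rewrite ipDl !ipDr (ipC b a); ring. Qed.

Lemma rot_le x : ip (Om *m (stp x).1) (Om *m (stp x).1) <= ip (Om *m x.1) (Om *m x.1) + ip (vv x) (vv x).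
Proof. by rewrite -rot lerDl ip_ge0. Qed.

Lemma lower_aux (Z0 Z1 V X B b0 b1 mm : R) :
  (2^-1 * mm + 1) ^+ 2 * b0 <= Z0 -> (2^-1 * mm + 1) ^+ 2 * b1 <= Z1 -> Z1 <= Z0 + V -> 0 <= V ->
  0 <= B + 2 * (mm + 1) * X + (mm + 1) ^+ 2 * b1 -> B <= mm ^+ 2 * b0 ->
  0 <= b0 -> 0 <= b1 -> 0 <= mm -> b0 <= 2 * (V + Z0 + X).
Proof.
move=> H1 H2 H3 H4 H5 H6 a0 a1 m0.
set W := 2^-1 * mm + 1 in H1 H2.
set t := mm + 1 in H5.
have t0 : 0 < t by rewrite /t ltr_wpDl.
have P1 : 0 <= (t * W ^+ 2 - mm ^+ 2 - t) * b0.
  apply: mulr_ge0 => //; rewrite /t /W; timeout 20 nra.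
have P2 : 0 <= t * (W ^+ 2 - t) * b1.
  apply: mulr_ge0 => //; apply: mulr_ge0; rewrite /t /W; timeout 20 nra.
have Q1 : 0 <= t * (Z0 - W ^+ 2 * b0) by apply: mulr_ge0; [exact: ltW| rewrite subr_ge0].
have Q2 : 0 <= t * (Z1 - W ^+ 2 * b1) by apply: mulr_ge0; [exact: ltW| rewrite subr_ge0].
have Q3 : 0 <= t * (Z0 + V - Z1) by apply: mulr_ge0; [exact: ltW| rewrite subr_ge0].
have Q4 : 0 <= t * V by apply: mulr_ge0; [exact: ltW|].
have Q5 : t * b0 <= t * (2 * (V + Z0 + X)).
  clearbody W t; first [timeout 30 lra | timeout 30 nra].
by rewrite -(ler_pM2l t0).
Qed.

Arguments lower_aux {Z0 Z1 V X B b0 b1 mm}.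

Lemma lower x : ip x.1 x.1 <= 2 * En x.
Proof.
have H3 := rot_le x.
have H1 := Om_ge x.1. have H2 := Om_ge (stp x).1.
have H5 := ip_ge0 (Mq x.1 + (m + 1)%:C *: (stp x).1).
Timeout 20 rewrite ipsq (ipC (Mq x.1) (stp x).1) in H5.
have H6 := Mq_le x.1.
have H4 := ip_ge0 (vv x).
have a0 := ip_ge0 x.1. have a1 := ip_ge0 (stp x).1.
have m0 := m_ge0.
rewrite /P2.En.
Timeout 30 exact: (lower_aux H1 H2 H3 H4 H5 H6 a0 a1 m0).
Qed.

Lemma le_aux (a z W : R) : W ^+ 2 * a <= z -> 1 <= W -> 0 <= a -> a <= z.
Proof.
move=> H1 H2 H3.
have h2 : 0 <= (W ^+ 2 - 1) * a by apply: mulr_ge0 => //; rewrite subr_ge0; nra.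
nra.
Qed.

Lemma bb_aux (S M : R) : S <= M -> 0 <= S -> 4 * ((2^-1 * h) ^+ 2 * S) <= M.
Proof.
move=> H1 H2.
have e : 4 * ((2^-1 * h) ^+ 2 * S) = h ^+ 2 * S by timeout 20 field.
rewrite e; have h2 : h ^+ 2 <= 1 by rewrite exprn_ile1 // ltW.
have h3 : 0 <= (1 - h ^+ 2) * S by apply: mulr_ge0 => //; rewrite subr_ge0.
nra.
Qed.

Lemma par (a b : 'cV[C]_d) : ip (a - b) (a - b) <= 2 * ip a a + 2 * ip b b.
Proof.
rewrite ipsqB; have := ip_ge0 (a + b); rewrite ipsqD.
move: (ip a a) (ip a b) (ip b b) => x y z ?; lra.
Qed.

Lemma upper_aux (V Z0 Z1 X B a1 P bb M2Q : R) :
  0 <= a1 - 2 * X + B -> a1 <= Z1 -> Z1 <= Z0 + V -> B <= M2Q ->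
  V <= 2 * P + 2 * bb -> 4 * bb <= M2Q -> 0 <= B ->
  V + Z0 + X <= 3 * P + 2 * M2Q + 3 / 2 * Z0.
Proof. move=> *; timeout 20 lra. Qed.

Arguments le_aux {a z W}.
Arguments upper_aux {V Z0 Z1 X B a1 P bb M2Q}.

Lemma upper x : En x <= 3 * ip x.2 x.2 + 2 * (m ^+ 2 * ip x.1 x.1) + 3 / 2 * ip (Om *m x.1) (Om *m x.1).
Proof.
have U1 := ip_ge0 ((stp x).1 - Mq x.1).
rewrite ipsqB in U1.
have U2 : ip (stp x).1 (stp x).1 <= ip (Om *m (stp x).1) (Om *m (stp x).1).
  apply: (le_aux (Om_ge _)); last exact: ip_ge0.
  by rewrite lerDr mulr_ge0 ?invr_ge0 ?m_ge0.
have U3 := rot_le x.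
have U4 := Mq_le x.1.
have U5 : ip (vv x) (vv x) <= 2 * ip x.2 x.2
     + 2 * ip ((2^-1 * h)%:C *: (SS *m Mq x.1)) ((2^-1 * h)%:C *: (SS *m Mq x.1)).
  exact: par.
have U6 : 4 * ip ((2^-1 * h)%:C *: (SS *m Mq x.1)) ((2^-1 * h)%:C *: (SS *m Mq x.1))
     <= m ^+ 2 * ip x.1 x.1.
  by rewrite ipZZ; apply: bb_aux; [exact: SMq_le| exact: ip_ge0].
have U7 := ip_ge0 (Mq x.1).
rewrite /P2.En.
Timeout 30 exact: (upper_aux U1 U2 U3 U4 U5 U6 U7).
Qed.

Lemma En_iter n x : En (iter n stp x) = En x.
Proof. elim: n => [//|n IH]; by rewrite iterS En_step. Qed.

Lemma final_bound n x : ip (iter n stp x).1 (iter n stp x).1 <=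
  6 * ip x.2 x.2 + 4 * (m ^+ 2 * ip x.1 x.1) + 3 * ip (Om *m x.1) (Om *m x.1).
Proof.
apply: le_trans (lower _) _; rewrite En_iter.
have := upper x.
move: (En x) (ip x.2 x.2) (m ^+ 2 * ip x.1 x.1) (ip (Om *m x.1) (Om *m x.1)) => a b c e H.
lra.
Qed.
End Bounds.

End P3.
Import P3.


Theorem lemma5 (R : realType) :
  exists C : R -> R -> R -> R -> R -> R,
  forall (d : nat) (w : 'I_d -> R) (A : 'M[R[i]]_d) (h : R)
         (psi1 phi : R -> R) (c0 c1 : R) (q0 qd0 : 'cV[R[i]]_d),
    (0 < d)%N ->
    (forall j, 0 < w j) ->
    selfadjoint A ->
    0 < h -> h <= 1 ->
    (forall x, psi1 (- x) = psi1 x) ->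
    (forall x, phi (- x) = phi x) ->
    (forall x, psi1 x = sinc x * phi x) ->
    0 <= c0 -> 0 <= c1 ->
    (forall x, `|psi1 x| <= c0) ->
    (forall x, `|phi x| <= c0) ->
    (forall x, `|phi x - 1| <= c1 * `|x|) ->
    (* omega = min_j w_j >= c0^2 ||A|| / 2 + 1 *)
    (forall j, 2^-1 * c0 ^+ 2 * opnorm A + 1 <= w j) ->
    forall n : nat,
      vnorm (traj w A h psi1 phi q0 qd0 n).1
        <= C c0 (opnorm A) (vnorm q0) (vnorm (diagR w *m q0)) (vnorm qd0).
Proof.
exists (fun c0 al Q Z P => Num.sqrt (6 * P ^+ 2 + 4 * ((c0 ^+ 2 * al) ^+ 2 * Q ^+ 2) + 3 * Z ^+ 2)).
move=> d w A h psi1 phi c0 c1 q0 qd0 _ wpos Hsa hpos hle1 _ _ Hpsi c0pos _ Hpsib Hphib _ Hw n.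
rewrite !vnormE !sqr_sqrtr ?ip_ge0 // ler_sqrt; last first.
  apply: addr_ge0; [apply: addr_ge0|]; apply: mulr_ge0 => //; rewrite ?mulr_ge0 ?sqr_ge0 ?ip_ge0 ?opnorm_ge0 //.
exact: (@final_bound R d w A h psi1 phi wpos hpos Hsa Hpsi c0 hle1 Hpsib Hphib Hw n (q0, qd0)).
Qed.
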